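(* Consider the approximate first-stage problem described in the context, with $\theta\in\Theta$. If this problem remains feasible when $z$ is fixed to some integer-valued $z^\star$, then the resulting fixed problem (optimization over $b$ and $y$ only) has an integer-valued optimal solution $(b^\star,y^\star)$, even when the integrality constraints on $y$ and $b$ are relaxed.
   Context: Data: a directed graph $\mathcal{G}_\text{RV}=(\mathcal{N}_\text{RV},\mathcal{E}_\text{RV})$ of one-step rebalancing-vehicle (RV) movements, a set $\mathcal{N}_\text{SV}$ of stations, a finite set $\mathcal{V}$ of RVs each with integer capacity $\overline{b}$, horizon $T$, integer bound $\overline{y}$, costs $c_{i,j}^t\in\mathbb{R}$, $r_i^t\ge0$. A parameter vector $\theta=(\theta_0,(\theta_i^t)_{i,t})$ with $\theta_0\in\mathbb{R}$ and $\theta_i^t=([\theta_i^t]_{-\overline{y}},\dots,[\theta_i^t]_{\overline{y}-1})\in\mathbb{R}^{2\overline{y}}$ defines $\overline{V}_i^t(\cdot;\theta_i^t):[-\overline{y},\overline{y}]\to\mathbb{R}$ as the continuous piecewise linear function with $\overline{V}_i^t(0)=0$ whose slope on $[m,m+1]$ is $[\theta_i^t]_m$ for $m=-\overline{y},\dots,\overline{y}-1$, and $\overline{V}(y;\theta)=\theta_0+\sum_{t=1}^T\sum_{i\in\mathcal{N}_\text{SV}\cap\mathcal{N}_\text{RV}}\overline{V}_i^t(y_i^{-,t}-y_i^{+,t};\theta_i^t)$. The admissible parameter set is $\Theta=\{\theta: -\theta^{\max}\le[\theta_i^t]_{m}\le\theta^{\max}\ \forall m,i,t;\ [\theta_i^t]_m\ge[\theta_i^t]_{m-1}\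 \text{for } m=-\overline{y}+1,\dots,\overline{y}-1,\ \forall i,t\}$ for a constant $\theta^{\max}>0$ (so each $\overline{V}_i^t$ is convex). The approximate first-stage problem is $$\min_{z,y,b}\ \sum_{t=1}^T\Big[\sum_{(i,j)\in\mathcal{E}_\text{RV}}c_{i,j}^tz_{i,j}^t+\sum_{i\in\mathcal{N}_\text{SV}\cap\mathcal{N}_\text{RV}}r_i^t(y_i^{+,t}+y_i^{-,t})\Big]+\overline{V}(y;\theta)$$ subject to: $\sum_{(i,j)\in\mathcal{E}_\text{RV}}b_{i,j}^t=\sum_{(j,i)\in\mathcal{E}_\text{RV}}b_{j,i}^{t-1}+y_i^{+,t}-y_i^{-,t}$ and $\sum_{(i,j)\in\mathcal{E}_\text{RV}}z_{i,j}^t=\sum_{(j,i)\in\mathcal{E}_\text{RV}}z_{j,i}^{t-1}$ for $t=1,\dots,T$, $i\in\mathcal{N}_\text{RV}$; $0\le b_{i,j}^t\le\overline{b}z_{i,j}^t$ for $t=0,\dots,T$ with integers $b_{i,j}^0$ given; $0\le y_i^{+,t}\le\overline{y}$, $0\le y_i^{-,t}\le\overline{y}$; integers $z_{i,j}^0$ given with $\sum_{i,j}z_{i,j}^0=|\mathcal{V}|$; $y,b$ integer-valued; $z_{i,j}^t$ integer-valued. (Variables $y_i^{\pm,t}$ are taken to be $0$ where not defined.) *)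

(* Defs.v *)
From HB Require Import structures.
From mathcomp Require Import all_boot all_order all_algebra.
From mathcomp Require Import reals.
Set Implicit Arguments. Unset Strict Implicit. Unset Printing Implicit Defensive.
Import Order.TTheory GRing.Theory Num.Theory.
Local Open Scope ring_scope.

Definition isInt (R : realType) (x : R) : Prop := exists k : int, x = k%:~R.

Definition clampI (R : realType) (m : int) (x : R) : R :=
  Num.min (Num.max x m%:~R) (m%:~R + 1).

(* The continuous piecewise linear function on [-ybar, ybar] with value 0 at 0
   and slope (th m) on [m, m+1], m = -ybar, ..., ybar-1 (explicit formula). *)
Definition Vbar_it (R : realType) (ybar : nat) (th : int -> R) (x : R) : R :=
  \sum_(k < 2 * ybar)
     th (Posz k - Posz ybar) *
       (clampI (Posz k - Posz ybar) x - clampI (Posz k - Posz ybar) 0).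

(* Admissible parameter set Theta (theta_0 is unconstrained). th t i m is
   [theta_i^t]_m, relevant for t = 1..T, i in S (= N_SV ∩ N_RV),
   m = -ybar..ybar-1. *)
Definition inTheta (R : realType) (Node : finType) (S : {set Node})
    (T ybar : nat) (thmax : R) (th : nat -> Node -> int -> R) : Prop :=
  forall t i (m : int), (1 <= t <= T)%N -> i \in S ->
    (- Posz ybar <= m < Posz ybar ->
       - thmax <= th t i m <= thmax) /\
    (- Posz ybar + 1 <= m < Posz ybar -> th t i (m - 1) <= th t i m).

Definition Vbar (R : realType) (Node : finType) (S : {set Node})
    (T ybar : nat) (th0 : R) (th : nat -> Node -> int -> R)
    (yp ym : nat -> Node -> R) : R :=
  th0 + \sum_(1 <= t < T.+1) \sum_(i in S)
          Vbar_it ybar (th t i) (ym t i - yp t i).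

Definition objective (R : realType) (Node : finType) (E : rel Node)
    (S : {set Node}) (T ybar : nat) (c : nat -> Node -> Node -> R)
    (r : nat -> Node -> R) (th0 : R) (th : nat -> Node -> int -> R)
    (z b : nat -> Node -> Node -> R) (yp ym : nat -> Node -> R) : R :=
  \sum_(1 <= t < T.+1)
     ((\sum_(i : Node) \sum_(j : Node | E i j) c t i j * z t i j)
      + \sum_(i in S) r t i * (yp t i + ym t i))
  + Vbar S T ybar th0 th yp ym.

(* Linear constraints of the approximate first-stage problem (integrality
   constraints are stated separately). Nodes are N_RV; S = N_SV ∩ N_RV;
   y^{+-} is forced to 0 at nodes outside S. *)
Definition feasible (R : realType) (Node : finType) (E : rel Node)
    (S : {set Node}) (T ybar bbar : nat) (z0 b0 : Node -> Node -> int)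
    (z b : nat -> Node -> Node -> R) (yp ym : nat -> Node -> R) : Prop :=
  (forall i j, E i j -> z 0%N i j = (z0 i j)%:~R /\ b 0%N i j = (b0 i j)%:~R)
  /\ (forall t i, (1 <= t <= T)%N ->
        \sum_(j | E i j) b t i j
          = \sum_(j | E j i) b t.-1 j i + yp t i - ym t i)
  /\ (forall t i, (1 <= t <= T)%N ->
        \sum_(j | E i j) z t i j = \sum_(j | E j i) z t.-1 j i)
  /\ (forall t i j, (t <= T)%N -> E i j ->
        0 <= b t i j <= bbar%:R * z t i j)
  /\ (forall t i, (1 <= t <= T)%N ->
        if i \in S then
          (0 <= yp t i <= ybar%:R) /\ (0 <= ym t i <= ybar%:R)
        else yp t i = 0 /\ ym t i = 0).

Definition by_integral (R : realType) (Node : finType) (E : rel Node)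
    (S : {set Node}) (T : nat)
    (b : nat -> Node -> Node -> R) (yp ym : nat -> Node -> R) : Prop :=
  (forall t i j, (t <= T)%N -> E i j -> isInt (b t i j))
  /\ (forall t i, (1 <= t <= T)%N -> i \in S ->
        isInt (yp t i) /\ isInt (ym t i)).

(* Main.v *)
Require Import Defs.
From HB Require Import structures.
From mathcomp Require Import all_boot all_order all_algebra.
From mathcomp Require Import reals.
From mathcomp Require Import zify ring lra.
From Stdlib Require Import Classical_Prop.
Set Implicit Arguments. Unset Strict Implicit. Unset Printing Implicit Defensive.
Import Order.TTheory GRing.Theory Num.Theory.
Local Open Scope ring_scope.

Section Gen.
Variables (R : realType) (A V : finType) (tl hd : A -> option V).

Definition inc a w : R := (tl a == w)%:R - (hd a == w)%:R.
Definition net (x : A -> R) w := \sum_a x a * inc a w.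
Definition degF (F : {set A}) w := (\sum_(a in F) ((tl a == w) + (hd a == w)))%N.

Lemma sum_eqw (u : option V) : (\sum_(w : option V) (u == w) = 1)%N.
Proof.
rewrite (bigD1 u) //= eqxx big1 // => w /negbTE; by rewrite eq_sym => ->.
Qed.

Lemma sum_eqw' (u : option V) : (\sum_(w : option V) (w == u) = 1)%N.
Proof.
rewrite (bigD1 u) //= eqxx big1 // => w /negbTE ->. by [].
Qed.

Lemma sum_deg F : (\sum_(w : option V) degF F w = 2 * #|F|)%N.
Proof.
rewrite /degF exchange_big /= -sum1_card big_distrr /=.
apply: eq_bigr => a _; have E u : (\sum_(w : option V) (u == w) = 1)%N := sum_eqw u.
  by rewrite big_split /= !E.
Qed.

Lemma sum_inc a : \sum_w inc a w = 0.
Proof.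
rewrite /inc sumrB.
have h u : (\sum_(w : option V) ((u == w)%:R : R)) = 1.
  by rewrite -natr_sum (sum_eqw u).
by rewrite !h subrr.
Qed.

Lemma arith1 (a b : nat) : (a + a <= 2 * b + 1 -> a <= b)%N.
Proof. lia. Qed.

Lemma arith2 (a b : nat) : (1 <= b - a -> a < b)%N.
Proof. lia. Qed.

Lemma kernel (F : {set A}) : F != set0 ->
  (forall v, degF F (Some v) != 1%N) ->
  exists d : A -> R, (exists a, d a != 0) /\ (forall a, a \notin F -> d a = 0)
    /\ forall w, net d w = 0.
Proof.
move=> F0 Hdeg.
set W := [set w | [exists a in F, (tl a == w) || (hd a == w)]].
have degW w : w \notin W -> degF F w = 0%N.
  rewrite inE => /existsPn H; apply: big1 => a aF.
  by move: (H a); rewrite aF /= negb_or => /andP[/negbTE -> /negbTE ->].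
have WF : (#|W| <= #|F|)%N.
  have H1 (w : option V) : ((w \in W) + (w \in W) <= degF F w + (w == None))%N.
    case wW: (w \in W); last by [].
    move: wW; rewrite inE => /existsP[a /andP[aF ha]].
    have h1 : (1 <= degF F w)%N.
      rewrite /degF (bigD1 a) //=; move: ha; case/orP => /eqP->; rewrite eqxx; lia.
    clear ha; case: w h1 => [v|] h1 /=; last by lia.
    move: (Hdeg v) h1; rewrite addn0; case: (degF F (Some v)) => [|[|n]] //.
  have : (\sum_(w : option V) ((w \in W) + (w \in W)) <=
     \sum_(w : option V) (degF F w + (w == None)))%N.
    by apply: leq_sum => w _; apply: H1.
  have E3 : (\sum_(w : option V) (w \in W) = #|W|)%N.
    rewrite -sum1_card [RHS]big_mkcond /=; apply: eq_bigr => w _; by case: (w \in W).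
  rewrite !big_split /= E3 sum_deg sum_eqw'.
  by move=> h; apply: (arith1 h).
have [a0 a0F] : exists a, a \in F by apply/set0Pn.
have W0 : (0 < #|W|)%N.
  apply/card_gt0P; exists (tl a0); rewrite inE; apply/existsP; exists a0; by rewrite a0F eqxx.
pose M := \matrix_(i < #|F|, j < #|W|) inc (enum_val i) (enum_val j).
have incW a w : a \in F -> w \notin W -> inc a w = 0.
  move=> aF; rewrite inE => /existsPn /(_ a); rewrite aF /= negb_or.
  by rewrite /inc; case/andP => /negbTE -> /negbTE ->; rewrite subrr.
have oM : (const_mx 1 : 'rV[R]_#|W|) *m M^T = 0.
  apply/rowP => i; rewrite !mxE.
  transitivity (\sum_(j < #|W|) inc (enum_val i) (enum_val j)).
    by apply: eq_bigr => j _; rewrite !mxE mul1r.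
  rewrite -big_enum_val /=.
  rewrite -[RHS](sum_inc (enum_val i)) [RHS](bigID (mem W)) /= [X in _ = _ + X]big1 ?addr0 //.
  by move=> w wW; rewrite incW // enum_valP.
have rkM : (\rank M < #|W|)%N.
  have : (const_mx 1 : 'rV[R]_#|W|) != 0.
    apply/rV0Pn; exists (Ordinal W0); by rewrite mxE oner_eq0.
  move=> o0; have r1 : \rank (const_mx 1 : 'rV[R]_#|W|) = 1%N by rewrite rank_rV o0.
  have sk : ((const_mx 1 : 'rV[R]_#|W|) <= kermx M^T)%MS by apply/sub_kermxP.
  have := mxrankS sk.
  rewrite mxrank_ker mxrank_tr r1.
  by move=> h; apply: arith2.
have : ~~ row_free M by rewrite /row_free; apply/negP => /eqP; lia.
rewrite -kermx_eq0 => /rowV0Pn[u /sub_kermxP uM u0].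
exists (fun a => \sum_(i | enum_val i == a) u 0 i); split; [|split].
- case/rV0Pn: u0 => i ui; exists (enum_val i).
  rewrite (big_pred1 i) // => j /=; apply/eqP/eqP => [/enum_val_inj|->] //.
- move=> a aF; apply: big_pred0 => i; apply/negbTE/eqP => ea.
  by move: aF; rewrite -ea enum_valP.
- move=> w; rewrite /net.
  transitivity (\sum_a \sum_(i | enum_val i == a) u 0 i * inc (enum_val i) w).
    by apply: eq_bigr => a _; rewrite mulr_suml; apply: eq_bigr => i /eqP->.
  rewrite (exchange_big_dep predT) //=.
  rewrite [LHS](eq_bigr (fun i => u 0 i * inc (enum_val i) w)); last first.
    by move=> i _; rewrite (big_pred1 (enum_val i)) // => a; rewrite /= eq_sym.
  case wW: (w \in W); last first.
    by apply: big1 => i _; rewrite incW ?mulr0 ?enum_valP ?wW.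
  move/rowP: uM => /(_ (enum_rank_in wW w)).
  rewrite !mxE => h; apply: (etrans _ h); apply: eq_bigr => i _; by rewrite mxE enum_rankK_in.
Qed.

Definition fr (x : A -> R) : {set A} := [set a | x a \isn't a Num.int].
Definition fl (y : R) : R := (Num.floor y)%:~R.

Lemma arith3 (a b : nat) : (a != 0 -> a + b = 1 -> a = 1 /\ b = 0)%N.
Proof. lia. Qed.

Lemma deg_ne1 (x : A -> R) : (forall v, net x (Some v) \is a Num.int) ->
  forall v, degF (fr x) (Some v) != 1%N.
Proof.
move=> Hn v; apply/negP => /eqP Hd.
set w := Some v in Hd.
set c := fun a => ((tl a == w) + (hd a == w))%N.
have [a1 /andP[a1F ca1]] : exists a1, (a1 \in fr x) && (c a1 != 0%N).
  apply/existsP; apply: contraT; rewrite negb_exists => /forallP H.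
  move: Hd; rewrite /degF big1 // => a aF; move: (H a); rewrite aF /= => /negPn/eqP.
  by [].
move: Hd; rewrite /degF (bigD1 a1) //= -/(c a1).
move=> Hs; have [c1 /eqP Hr] := arith3 ca1 Hs.
move: Hr; rewrite sum_nat_eq0 => /forallP Hr.
have inc0 a : a \in fr x -> a != a1 -> inc a w = 0.
  move=> aF an; move: (Hr a); rewrite aF an /= addn_eq0 eqb0 eqb0 => /andP[/negbTE h1 /negbTE h2].
  by rewrite /inc h1 h2 subrr.
have rest : (\sum_(a | a != a1) x a * inc a w) \is a Num.int.
  apply: rpred_sum => a an.
  case aF: (a \in fr x); first by rewrite inc0 // mulr0 rpred0.
  move: aF; rewrite inE => /negbFE xi.
  by rewrite /inc rpredM // rpredB // rpred_nat.
have inc1 : (inc a1 w = 1) \/ (inc a1 w = -1).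
  move: c1; rewrite /c /inc; case: (tl a1 == w); case: (hd a1 == w) => //= _.
  - by left; rewrite subr0.
  - by right; rewrite sub0r.
have := Hn v; rewrite /net (bigD1 a1) //= -/w => H.
have : x a1 * inc a1 w \is a Num.int.
  have -> : x a1 * inc a1 w = (x a1 * inc a1 w + \sum_(a | a != a1) x a * inc a w)
     - \sum_(a | a != a1) x a * inc a w by rewrite addrK.
  by rewrite rpredB.
move: a1F; rewrite inE => /negP; case: inc1 => ->; rewrite ?mulr1 ?mulrN1 ?rpredN //.
Qed.

Lemma list_argmin (T : eqType) (P : T -> Prop) (f : T -> R) (s : seq T) :
  (exists2 a, a \in s & P a) ->
  exists a0, P a0 /\ forall b, b \in s -> P b -> f a0 <= f b.
Proof.
elim: s => [|y s IH] [a]; rewrite ?in_nil // in_cons => ains Pa.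
case: (Classical_Prop.classic (exists2 a, a \in s & P a)) => [/IH [a0 [Pa0 H]] | nH].
  case: (Classical_Prop.classic (P y)) => Py.
    case: (leP (f y) (f a0)) => hy.
      exists y; split => // b; rewrite in_cons => /orP[/eqP->|bs] Pb //.
      exact: le_trans hy (H b bs Pb).
    exists a0; split => // b; rewrite in_cons => /orP[/eqP->|bs] Pb; last exact: H.
    exact: ltW.
  exists a0; split => // b; rewrite in_cons => /orP[/eqP->|bs] Pb //; exact: H.
case/orP: ains => [/eqP ay|ains]; last by case: nH; exists a.
exists y; split; first by rewrite -ay.
move=> b; rewrite in_cons => /orP[/eqP->|bs] Pb //.
by case: nH; exists b.
Qed.

Variables (lo up : A -> int) (g : A -> R -> R).
Hypothesis Hpa : forall a (n : int) y, n%:~R <= y <= n%:~R + 1 ->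
  g a y = g a n%:~R + (y - n%:~R) * (g a (n%:~R + 1) - g a n%:~R).

Definition bnd (x : A -> R) := forall a, (lo a)%:~R <= x a <= (up a)%:~R.
Definition cost (x : A -> R) := \sum_a g a (x a).
Definition sig x a := g a (fl (x a) + 1) - g a (fl (x a)).

Lemma flD1 (y : R) : fl y + 1 = (Num.floor y + 1)%:~R.
Proof. by rewrite /fl intrD. Qed.

Lemma frac_cell (x : A -> R) a : a \in fr x -> fl (x a) < x a < fl (x a) + 1.
Proof.
rewrite inE intrEfloor /fl => nx.
rewrite lt_neqAle floor_le andbT (negbTE nx) /=.
by rewrite -/(fl (x a)) flD1 floorD1_gt.
Qed.

Lemma frac_bnd (x : A -> R) a : bnd x -> a \in fr x ->
  (lo a)%:~R <= fl (x a) /\ fl (x a) + 1 <= (up a)%:~R.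
Proof.
move=> /(_ a) /andP[hl hu] aF; split.
  by rewrite /fl ler_int floor_ge_int.
have : x a < (up a)%:~R.
  rewrite lt_neqAle hu andbT; apply/eqP => h; move: aF.
  by rewrite inE h rpred_int.
rewrite -floor_lt_int => h.
by rewrite flD1 ler_int lezD1.
Qed.

Lemma step_dir (x d : A -> R) : bnd x ->
  (forall a, a \notin fr x -> d a = 0) -> (exists a, d a != 0) ->
  (forall w, net d w = 0) -> \sum_a sig x a * d a <= 0 ->
  exists x', bnd x' /\ (forall w, net x' w = net x w) /\ cost x' <= cost x
    /\ (#|fr x'| < #|fr x|)%N.
Proof.
move=> bx dF [a1 da1] nd D0.
pose rho a := if 0 < d a then (fl (x a) + 1 - x a) / d a else (fl (x a) - x a) / d a.
have dfr a : d a != 0 -> a \in fr x.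
  by apply: contraR => /dF ->; rewrite eqxx.
have rho_pos a : d a != 0 -> 0 < rho a.
  move=> da; have /andP[c1 c2] := frac_cell (dfr a da).
  rewrite /rho; case: ifP => dp.
    by apply: divr_gt0; rewrite // subr_gt0.
  have dn : d a < 0 by rewrite lt_neqAle da /= leNgt dp.
  by rewrite ltr_ndivlMr // mul0r subr_lt0.
have [a0 [da0 Hmin]] := @list_argmin _ (fun a => d a != 0) rho (enum A)
   (ex_intro2 _ _ a1 (mem_enum _ a1) da1).
set s := rho a0.
have s0 : 0 < s by exact: rho_pos.
have smin a : d a != 0 -> s <= rho a by move=> da; apply: Hmin; rewrite ?mem_enum.
pose x' a := x a + s * d a.
have cell a : d a != 0 -> fl (x a) <= x' a <= fl (x a) + 1.
  move=> da; have /andP[c1 c2] := frac_cell (dfr a da).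
  have := smin a da; rewrite /rho /x'; case: ifP => dp hs.
    have sd : 0 <= s * d a by rewrite mulr_ge0 // ltW.
    move: hs; rewrite ler_pdivlMr // => hs.
    apply/andP; split; lra.
  have dn : d a < 0 by rewrite lt_neqAle da /= leNgt dp.
  have sd : s * d a <= 0 by rewrite pmulr_rle0 // ltW.
  move: hs; rewrite ler_ndivlMr // => hs.
  apply/andP; split; lra.
have x'a0 : x' a0 \is a Num.int.
  rewrite /x' /s /rho; case: ifP => _.
    by rewrite divfK // addrC subrK /fl rpredD ?rpred_int ?rpred1.
  by rewrite divfK // addrC subrK /fl rpred_int.
exists x'; split; [|split; [|split]].
- move=> a; case: (eqVneq (d a) 0) => [da|da]; first by rewrite /x' da mulr0 addr0; apply: bx.
  have [h1 h2] := frac_bnd bx (dfr a da).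
  have /andP[c1 c2] := cell a da.
  by rewrite (le_trans h1 c1) (le_trans c2 h2).
- move=> w; rewrite /net /x'.
  under eq_bigr do rewrite mulrDl -mulrA.
  by rewrite big_split /= -mulr_sumr -/(net d w) nd mulr0 addr0.
- rewrite /cost -subr_le0 -sumrB.
  rewrite (eq_bigr (fun a => s * (sig x a * d a))).
    by rewrite -mulr_sumr pmulr_rle0.
  move=> a _; case: (eqVneq (d a) 0) => [da|da].
    by rewrite /x' da !mulr0 addr0 subrr.
  have /andP[c1 c2] := frac_cell (dfr a da).
  rewrite (@Hpa a (Num.floor (x a)) (x' a)); last exact: cell.
  rewrite (@Hpa a (Num.floor (x a)) (x a)); last by rewrite (ltW c1) ltW.
  rewrite /sig /fl /x'; ring.
- apply: (@leq_ltn_trans #|fr x :\ a0|).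
    apply: subset_leq_card; apply/subsetP => a; rewrite !inE => na.
    apply/andP; split.
      by apply: contraNneq na => ->.
    move: na; apply: contraNN => ia.
    by rewrite /x' (dF a) ?mulr0 ?addr0 // inE negbK.
  by rewrite (cardsD1 a0 (fr x)) dfr.
Qed.

Lemma step (x : A -> R) : bnd x -> (forall v, net x (Some v) \is a Num.int) ->
  fr x != set0 ->
  exists x', bnd x' /\ (forall w, net x' w = net x w) /\ cost x' <= cost x
    /\ (#|fr x'| < #|fr x|)%N.
Proof.
move=> bx nx F0.
have [d [[a1 da1] [dF nd]]] := kernel F0 (deg_ne1 nx).
case: (leP (\sum_a sig x a * d a) 0) => D.
  exact: step_dir bx dF (ex_intro _ a1 da1) nd D.
apply: (@step_dir x (fun a => - d a)) => //.
- by move=> a /dF ->; rewrite oppr0.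
- by exists a1; rewrite oppr_eq0.
- move=> w; rewrite /net.
  under eq_bigr do rewrite mulNr.
  by rewrite sumrN -/(net d w) nd oppr0.
- under eq_bigr do rewrite mulrN.
  by rewrite sumrN oppr_le0 ltW.
Qed.

Lemma round (x : A -> R) : bnd x -> (forall v, net x (Some v) \is a Num.int) ->
  exists x', (forall a, x' a \is a Num.int) /\ bnd x' /\
    (forall w, net x' w = net x w) /\ cost x' <= cost x.
Proof.
move=> bx nx; move: {2}#|fr x| (leqnn #|fr x|) => n.
elim: n x bx nx => [|n IH] x bx nx hn.
  have F0 : fr x = set0 by apply/eqP; rewrite -cards_eq0 -leqn0.
  exists x; split; last by [].
  move=> a; apply: contraT => ai.
  have : a \in fr x by rewrite inE.
  by rewrite F0 inE.
case: (eqVneq (fr x) set0) => F0.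
  exists x; split; last by [].
  move=> a; apply: contraT => ai; have : a \in fr x by rewrite inE.
  by rewrite F0 inE.
have [x1 [b1 [n1 [c1 k1]]]] := step bx nx F0.
have nx1 : forall v, net x1 (Some v) \is a Num.int by move=> v; rewrite n1.
have [x2 [i2 [b2 [n2 c2]]]] := IH x1 b1 nx1 (leq_trans (k1 : (#|fr x1| < #|fr x|)%N) hn).
exists x2; split => //; split => //; split.
  by move=> w; rewrite n2 n1.
exact: le_trans c2 c1.
Qed.

Lemma gen_opt (N : V -> R) : (forall v, N v \is a Num.int) ->
  (exists x, bnd x /\ forall v, net x (Some v) = N v) ->
  exists xs, (bnd xs /\ forall v, net xs (Some v) = N v) /\
    (forall a, xs a \is a Num.int) /\
    forall x, bnd x -> (forall v, net x (Some v) = N v) -> cost xs <= cost x.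
Proof.
move=> Ni [x0 [b0 n0]].
pose K := (\max_a `|up a - lo a|%N).+1.
pose pt (p : {ffun A -> 'I_K}) a : R := (lo a + (p a : nat)%:Z)%:~R.
have toP x : (forall a, x a \is a Num.int) -> bnd x ->
    exists p, forall a, pt p a = x a.
  move=> xi bx.
  exists [ffun a => inord (`|Num.floor (x a) - lo a|%N)] => a.
  rewrite /pt ffunE.
  have /andP[l u] := bx a.
  have fl1 : lo a <= Num.floor (x a) by rewrite floor_ge_int.
  have fu1 : Num.floor (x a) <= up a.
    by rewrite -ltzD1 floor_lt_int intrD (le_lt_trans u) // ltrDl ltr01.
  have hK : (`|Num.floor (x a) - lo a|%N < K)%N.
    rewrite ltnS; apply: leq_trans (leq_bigmax a).
    rewrite -lez_nat !abszE !ger0_norm ?subr_ge0 //; last exact: le_trans fu1.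
    by rewrite lerD2r.
  rewrite inordK // abszE ger0_norm ?subr_ge0 // (addrC (lo a)) subrK.
  by move: (xi a); rewrite intrEfloor => /eqP.
have xfeas x : (forall a, x a \is a Num.int) -> bnd x ->
    (forall v, net x (Some v) = N v) ->
    exists p, (bnd (pt p) /\ forall v, net (pt p) (Some v) = N v) /\ cost (pt p) = cost x.
  move=> xi bx nx; have [p hp] := toP x xi bx.
  exists p; split; [split|].
  - by move=> a; rewrite hp.
  - by move=> v; rewrite -nx /net; apply: eq_bigr => a _; rewrite hp.
  - by rewrite /cost; apply: eq_bigr => a _; rewrite hp.
have rnd x : bnd x -> (forall v, net x (Some v) = N v) ->
    exists p, (bnd (pt p) /\ forall v, net (pt p) (Some v) = N v) /\ cost (pt p) <= cost x.
  move=> bx nx.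
  have nxi : forall v, net x (Some v) \is a Num.int by move=> v; rewrite nx.
  have [x' [xi [bx' [nx' cx']]]] := round bx nxi.
  have nx'' : forall v, net x' (Some v) = N v by move=> v; rewrite nx'.
  have [p [fp cp]] := xfeas x' xi bx' nx''.
  by exists p; split => //; rewrite cp.
have [p1 [f1 _]] := rnd x0 b0 n0.
have [p0 [f0 Hmin]] := @list_argmin _
   (fun p => bnd (pt p) /\ forall v, net (pt p) (Some v) = N v)
   (fun p => cost (pt p)) (enum {ffun A -> 'I_K})
   (ex_intro2 _ _ p1 (mem_enum _ p1) f1).
exists (pt p0); split => //; split.
  by move=> a; rewrite /pt rpred_int.
move=> x bx nx; have [p [fp cp]] := rnd x bx nx.
exact: le_trans (Hmin p (mem_enum _ p) fp) cp.
Qed.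
End Gen.

Section PA.
Variable R : realType.
Definition pa (f : R -> R) := forall (n : int) y, n%:~R <= y <= n%:~R + 1 ->
  f y = f n%:~R + (y - n%:~R) * (f (n%:~R + 1) - f n%:~R).

Lemma intrD1 (n : int) : (n + 1)%:~R = n%:~R + 1 :> R.
Proof. by rewrite intrD. Qed.

Lemma pa_lin (c e : R) : pa (fun y => c * y + e).
Proof. by move=> n y _; ring. Qed.

Lemma pa_sum (n : nat) (F : 'I_n -> R -> R) : (forall k, pa (F k)) ->
  pa (fun y => \sum_(k < n) F k y).
Proof.
move=> H m y hy.
rewrite -sumrB mulr_sumr -big_split /=; apply: eq_bigr => k _; exact: H.
Qed.

Lemma pa_aff (f : R -> R) (c e : R) : pa f -> pa (fun y => c * (f y - e)).
Proof. by move=> H n y hy; rewrite (H n y hy); ring. Qed.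

Lemma clamp_lo (m : int) (y : R) : y <= m%:~R -> clampI m y = m%:~R.
Proof.
move=> h; rewrite /clampI max_r // min_l //; by rewrite lerDl.
Qed.

Lemma clamp_hi (m : int) (y : R) : m%:~R + 1 <= y -> clampI m y = m%:~R + 1.
Proof.
move=> h; have h1 : m%:~R <= m%:~R + 1 :> R by rewrite lerDl.
by rewrite /clampI max_l ?(le_trans h1) // min_r.
Qed.

Lemma clamp_mid (m : int) (y : R) : m%:~R <= y <= m%:~R + 1 -> clampI m y = y.
Proof.
by case/andP => h1 h2; rewrite /clampI max_l // min_l.
Qed.

Lemma pa_clamp (m : int) : pa (clampI m).
Proof.
move=> n y /andP[h1 h2].
have hn : n%:~R <= n%:~R + 1 :> R by rewrite lerDl.
case: (ltgtP n m) => [nm|mn|<-].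
- have nm' : n%:~R + 1 <= m%:~R :> R by rewrite -intrD1 ler_int lezD1.
  rewrite !clamp_lo ?(le_trans h2) ?(le_trans hn) //; ring.
- have mn' : m%:~R + 1 <= n%:~R :> R by rewrite -intrD1 ler_int lezD1.
  rewrite !clamp_hi ?(le_trans mn') ?(le_trans _ hn) //; ring.
- rewrite !clamp_mid ?lexx ?hn ?h1 ?h2 ?lerDl //; ring.
Qed.

Lemma pa_Vbar (ybar : nat) (th : int -> R) : pa (Vbar_it ybar th).
Proof.
rewrite /Vbar_it; apply: pa_sum => k; apply: pa_aff; exact: pa_clamp.
Qed.

Lemma pa_neg (f : R -> R) : pa f -> pa (fun y => 0 * y + 0).
Proof. move=> _; exact: pa_lin. Qed.
End PA.

Section Util.
Variable R : realType.
Lemma sum_pick (I : finType) (i0 : I) (P : pred I) (F : I -> R) :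
  (forall i, P i -> i = i0) ->
  \sum_i (if P i then F i else 0) = if P i0 then F i0 else 0.
Proof.
move=> H; rewrite (bigD1 i0) //= big1 ?addr0 // => i ni.
case: ifP => // /H ei; by rewrite ei eqxx in ni.
Qed.

Lemma sum_pick2 (I : finType) (i1 i2 : I) (P : pred I) (F : I -> R) :
  (forall i, P i -> i = i1 \/ i = i2) -> i1 != i2 ->
  \sum_i (if P i then F i else 0) =
  (if P i1 then F i1 else 0) + (if P i2 then F i2 else 0).
Proof.
move=> H n12; rewrite (bigD1 i1) //= (bigD1 i2) //= 1?eq_sym // big1 ?addr0 //.
move=> i /andP[n1 n2]; case: ifP => // /H [e|e]; by rewrite e eqxx in n1 n2.
Qed.

Lemma sum_pair (I J : finType) (F : I * J -> R) :
  \sum_p F p = \sum_i \sum_j F (i, j).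
Proof. by rewrite pair_big /=; apply: eq_bigr => [[i j]]. Qed.

Lemma net_split (A V : finType) (tl hd : A -> option V) (x : A -> R) w :
  net tl hd x w = \sum_a (if tl a == w then x a else 0)
                - \sum_a (if hd a == w then x a else 0).
Proof.
rewrite /net /inc -sumrB; apply: eq_bigr => a _.
by case: (tl a == w); case: (hd a == w); rewrite /=; ring.
Qed.
End Util.

Section App.
Variables (R : realType) (Node : finType) (E : rel Node) (T : nat).

Definition Arc := ('I_T.+1 * Node * Node + 'I_3 * 'I_T.+1 * Node)%type.
Definition Nd := (bool * 'I_T.+1 * Node)%type.

Definition atl (a : Arc) : option Nd :=
  match a with
  | inl p => if E p.1.2 p.2 && (0 < p.1.1)%N then Some (false, p.1.1, p.1.2) else None
  | inr q => if (0 < q.1.2)%N then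
               (if (q.1.1 == 1%N :> nat) then Some (false, q.1.2, q.2)
                else Some (true, q.1.2, q.2)) else None
  end.

Definition ahd (a : Arc) : option Nd :=
  match a with
  | inl p => if E p.1.2 p.2 && (p.1.1 < T)%N then Some (false, inord p.1.1.+1, p.2) else None
  | inr q => if (0 < q.1.2)%N && (q.1.1 != 2%N :> nat) then
               (if (q.1.1 == 0%N :> nat) then Some (false, q.1.2, q.2)
                else Some (true, q.1.2, q.2)) else None
  end.

Lemma net_t0 (x : Arc -> R) b i : net atl ahd x (Some (b, ord0, i)) = 0.
Proof.
rewrite net_split !big1 ?subrr // => -[[[k i'] j]|[[m t] i']] _ /=;
  case: ifP => // H; move: H.
- case: ifP => // /andP[_ hk] /eqP [_ ek _].
  by move: (congr1 val ek); rewrite /= inordK.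
- case: ifP => // /andP[ht _]; by case: ifP => _ /eqP [_ et _]; rewrite et in ht.
- case: ifP => // /andP[_ hk] /eqP [_ ek _]; by rewrite ek in hk.
- case: ifP => // ht; by case: ifP => _ /eqP [_ et _]; rewrite et in ht.
Qed.

Lemma net_main (x : Arc -> R) (t : 'I_T.+1) i : (0 < t)%N ->
  net atl ahd x (Some (false, t, i)) =
   (\sum_(j | E i j) x (inl (t, i, j)) + x (inr (inord 1, t, i)))
   - (\sum_(j | E j i) x (inl (inord t.-1, j, i)) + x (inr (inord 0, t, i))).
Proof.
move=> t0; rewrite net_split !big_sumType /=.
congr (_ - _); congr (_ + _).
- rewrite sum_pair exchange_big [RHS]big_mkcond /=; apply: eq_bigr => j _.
  rewrite (sum_pick (i0 := (t, i))) /=.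
    by rewrite t0 andbT; case: (E i j); rewrite ?eqxx.
  by move=> [k i'] /=; case: ifP => // _ /eqP [-> ->].
- rewrite (sum_pick (i0 := (inord 1, t, i))) /=.
    by rewrite t0 inordK // eqxx /= eqxx.
  move=> [[m t'] i'] /=; case: ifP => // _; case: ifP => // /eqP m1 /eqP [-> ->].
  by congr (_, _, _); apply: val_inj; rewrite /= inordK.
- rewrite sum_pair.
  rewrite (eq_bigr (fun ki => if ahd (inl (ki, i)) == Some (false, t, i)
                              then x (inl (ki, i)) else 0)); last first.
    move=> ki _; apply: sum_pick => j; case: ki => k i' /=.
    by case: ifP => // _ /eqP [_ ->].
  rewrite sum_pair exchange_big [RHS]big_mkcond /=; apply: eq_bigr => i' _.
  have tT : (t.-1 < T)%N by move: (ltn_ord t) t0; case: (nat_of_ord t) => // n; rewrite ltnS.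
  rewrite (sum_pick (i0 := (inord t.-1))) /=.
    rewrite inordK; last exact: ltn_trans tT (ltnSn T).
    rewrite tT andbT.
    have -> : (inord (t.-1).+1 : 'I_T.+1) = t.
      by apply: val_inj; rewrite /= prednK // inord_val.
    by case: (E i' i); rewrite ?eqxx.
  move=> k /=; case: ifP => // /andP[_ kT] /eqP [ek].
  apply: val_inj; move: (congr1 val ek); rewrite /= inordK // => <-.
  by rewrite inordK // (ltn_trans kT).
- rewrite (sum_pick (i0 := (inord 0, t, i))) /=.
    by rewrite t0 inordK // eqxx /= eqxx.
  move=> [[m t'] i'] /=; case: ifP => // _; case: ifP => // /eqP m0 /eqP [-> ->].
  by congr (_, _, _); apply: val_inj; rewrite /= inordK.
Qed.

Lemma net_aux (x : Arc -> R) (t : 'I_T.+1) i : (0 < t)%N ->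
  net atl ahd x (Some (true, t, i)) =
   (x (inr (inord 0, t, i)) + x (inr (inord 2, t, i))) - x (inr (inord 1, t, i)).
Proof.
move=> t0; rewrite net_split !big_sumType /=.
rewrite [X in X + _ - _]big1; last first.
  by move=> p _; case: ifP => // H; move: H; case: ifP.
rewrite [X in _ - (X + _)]big1; last first.
  by move=> p _; case: ifP => // H; move: H; case: ifP.
rewrite !add0r; congr (_ - _).
- rewrite (sum_pick2 (i1 := (inord 0, t, i)) (i2 := (inord 2, t, i))) /=.
  + by rewrite t0 !inordK //= eqxx.
  + move=> [[m t'] i'] /=; case: ifP => // _; case: ifP => // /negbT m1 /eqP [-> ->].
    have hm : m = inord 0 \/ m = inord 2.
      move: m1; case: m => [[|[|[|n]]] hm] //= _; [left|right];
        by apply: val_inj; rewrite /= inordK.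
    by case: hm => ->; [left|right].
  + apply/eqP => -[/(congr1 val)]; by rewrite /= !inordK.
- rewrite (sum_pick (i0 := (inord 1, t, i))) /=.
    by rewrite t0 !inordK //= eqxx.
  move=> [[m t'] i'] /=; case: ifP => // /andP[_ m2]; case: ifP => // /negbT m0 /eqP [-> ->].
  congr (_, _, _); apply: val_inj; rewrite /= inordK //.
  by move: m0 m2; case: m => [[|[|[|n]]] hm].
Qed.
End App.

Section Fin.
Variables (R : realType) (Node : finType) (E : rel Node) (S : {set Node})
  (bbar ybar T : nat) (c : nat -> Node -> Node -> R) (r : nat -> Node -> R)
  (th0 : R) (th : nat -> Node -> int -> R) (z0 b0 : Node -> Node -> int)
  (zs : nat -> Node -> Node -> int).

Definition X (b : nat -> Node -> Node -> R) (yp ym : nat -> Node -> R)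
  (a : Arc Node T) : R :=
  match a with
  | inl p => if E p.1.2 p.2 then b p.1.1 p.1.2 p.2 else 0
  | inr q => if (0 < q.1.2)%N then
      (if q.1.1 == 0%N :> nat then yp q.1.2 q.2
       else if q.1.1 == 1%N :> nat then ym q.1.2 q.2
       else ym q.1.2 q.2 - yp q.1.2 q.2) else 0
  end.

Definition lo (a : Arc Node T) : int :=
  match a with
  | inl p => if E p.1.2 p.2 && (p.1.1 == 0%N :> nat) then b0 p.1.2 p.2 else 0
  | inr q => if (0 < q.1.2)%N && (q.2 \in S) && (q.1.1 == 2%N :> nat)
             then - (ybar%:Z) else 0
  end.

Definition up (a : Arc Node T) : int :=
  match a with
  | inl p => if E p.1.2 p.2 then
               (if p.1.1 == 0%N :> nat then b0 p.1.2 p.2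
                else (bbar%:Z) * zs p.1.1 p.1.2 p.2) else 0
  | inr q => if (0 < q.1.2)%N && (q.2 \in S) then ybar%:Z else 0
  end.

Definition g (a : Arc Node T) (y : R) : R :=
  match a with
  | inl _ => 0
  | inr q => if (0 < q.1.2)%N && (q.2 \in S) then
      (if q.1.1 == 2%N :> nat then Vbar_it ybar (th q.1.2 q.2) y
       else r q.1.2 q.2 * y) else 0
  end.

Lemma g_pa a : pa (g a).
Proof.
case: a => [p|q] n y hy /=; first by rewrite subrr mulr0 addr0.
case: ifP => _; last by rewrite subrr mulr0 addr0.
case: ifP => _; first exact: pa_Vbar.
ring.
Qed.

Lemma cost_X b yp ym : cost g (X b yp ym) =
  \sum_(1 <= t < T.+1) \sum_(i in S)
     (r t i * (yp t i + ym t i) + Vbar_it ybar (th t i) (ym t i - yp t i)).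
Proof.
set H := fun t : nat => \sum_(i in S)
     (r t i * (yp t i + ym t i) + Vbar_it ybar (th t i) (ym t i - yp t i)).
have -> : \sum_(1 <= t < T.+1) H t = \sum_(t < T.+1) (if (0 < t)%N then H t else 0).
  rewrite -(big_mkord xpredT (fun t => if (0 < t)%N then H t else 0)).
  rewrite big_ltn // /= add0r; apply: eq_big_nat => t /andP[t0 _].
  by rewrite t0.
rewrite /cost big_sumType /= big1 ?add0r // sum_pair.
rewrite sum_pair exchange_big /=; apply: eq_bigr => t _.
rewrite exchange_big /= /H; case: ifP => t0; last first.
  by apply: big1 => i _; rewrite !big_ord_recl big_ord0 /= !addr0.
rewrite [RHS]big_mkcond /=; apply: eq_bigr => i _.
rewrite !big_ord_recl big_ord0 /=.
case: (i \in S); rewrite ?addr0 //; ring.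
Qed.

Definition zz t i j : R := (zs t i j)%:~R.
Definition Zc := \sum_(1 <= t < T.+1) \sum_(i : Node) \sum_(j : Node | E i j) c t i j * zz t i j.

Lemma obj_X b yp ym :
  objective E S T ybar c r th0 th zz b yp ym = Zc + th0 + cost g (X b yp ym).
Proof.
rewrite cost_X /objective /Vbar /Zc big_split /=.
under [X in _ = _ + _ + X]eq_bigr do rewrite big_split /=.
rewrite big_split /=; ring.
Qed.

Definition feas b yp ym := feasible E S T ybar bbar z0 b0 zz b yp ym.

Lemma bbar_zz t i j : ((bbar%:Z * zs t i j)%:~R : R) = bbar%:R * zz t i j.
Proof. by rewrite intrM. Qed.

Lemma X_bnd b yp ym : feas b yp ym -> bnd lo up (X b yp ym).
Proof.
case=> [Hz0 [Hbc [Hzc [Hbb Hy]]]].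
case=> [[[k i] j]|[[m t] i]] /=.
- case Eij: (E i j) => /=; last by rewrite lexx.
  case: eqP => [k0|k0].
    by have [_ hb] := Hz0 i j Eij; rewrite k0 hb lexx.
  by rewrite bbar_zz; apply: Hbb => //; rewrite -ltnS ltn_ord.
- case: t => [[|t] htT] /=; first by rewrite lexx.
  have tT : (1 <= t.+1 <= T)%N by rewrite ltnS in htT; rewrite htT.
  have := Hy t.+1 i tT; case: (i \in S) => /=; last first.
    by case=> -> ->; rewrite subrr !if_same lexx.
  case=> /andP[p1 p2] /andP[m1 m2].
  case: m => [[|[|[|n]]] hm] //=; rewrite ?p1 ?p2 ?m1 ?m2 //.
  rewrite mulrNz; apply/andP; split; lra.
Qed.

Lemma X_net b yp ym : feas b yp ym ->
  forall v, net (@atl Node E T) (@ahd Node E T) (X b yp ym) (Some v) = 0.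
Proof.
case=> [Hz0 [Hbc [Hzc [Hbb Hy]]]] [[bb t] i].
case: (eqVneq (t : nat) 0%N) => [t0|t0].
  have -> : t = ord0 by apply: val_inj.
  exact: net_t0.
have tp : (0 < t)%N by rewrite lt0n.
have tT : (1 <= t <= T)%N by rewrite tp -ltnS ltn_ord.
have tT1 : (t.-1 < T.+1)%N.
  by apply: leq_ltn_trans (leq_pred _) (ltn_ord t).
case: bb.
  rewrite net_aux //= tp !inordK //=; ring.
rewrite net_main //= tp !inordK //=.
rewrite [\sum_(j | E i j) _](eq_bigr (fun j => b t i j)); last by move=> j Eij; rewrite Eij.
rewrite [\sum_(j | E j i) _](eq_bigr (fun j => b t.-1 j i)); last by move=> j Eji; rewrite Eji ?inordK.
rewrite (Hbc t i tT); ring.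
Qed.

Definition bsf (xs : Arc Node T -> R) t i j := xs (inl (inord t, i, j)).
Definition ypf (xs : Arc Node T -> R) t i := xs (inr (inord 0, inord t, i)).
Definition ymf (xs : Arc Node T -> R) t i := xs (inr (inord 1, inord t, i)).

Lemma bnd00 (xs : Arc Node T -> R) a : bnd lo up xs -> lo a = 0 -> up a = 0 -> xs a = 0.
Proof.
move=> /(_ a) /andP[h1 h2] l0 u0; apply: le_anti.
by move: h1 h2; rewrite l0 u0 => -> ->.
Qed.

Lemma X_xs (xs : Arc Node T -> R) : bnd lo up xs ->
  (forall v, net (@atl Node E T) (@ahd Node E T) xs (Some v) = 0) ->
  forall a, X (bsf xs) (ypf xs) (ymf xs) a = xs a.
Proof.
move=> bx nx [[[k i] j]|[[m t] i]] /=.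
  case Eij: (E i j); first by rewrite /bsf inord_val.
  by apply/esym/bnd00 => //=; rewrite Eij.
case: t => [[|t] htT] /=.
  by apply/esym/bnd00.
have e1 : (inord t.+1 : 'I_T.+1) = Ordinal htT by apply: val_inj; rewrite /= inordK.
have := nx (true, Ordinal htT, i); rewrite net_aux //= => H.
rewrite /ypf /ymf e1.
case: m => [[|[|[|n]]] hm] //=.
- by congr (xs (inr (_, _, _))); apply: val_inj; rewrite /= inordK.
- by congr (xs (inr (_, _, _))); apply: val_inj; rewrite /= inordK.
- have e2 : (inord 2 : 'I_3) = Ordinal hm by apply: val_inj; rewrite /= inordK.
  rewrite e2 in H; lra.
Qed.

Lemma xs_feas (xs : Arc Node T -> R) b1 yp1 ym1 : feas b1 yp1 ym1 -> bnd lo up xs ->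
  (forall v, net (@atl Node E T) (@ahd Node E T) xs (Some v) = 0) ->
  feas (bsf xs) (ypf xs) (ymf xs).
Proof.
case=> [Hz0 [Hbc [Hzc [Hbb Hy]]]] bx nx.
split; [|split; [|split; [|split]]].
- move=> i j Eij; have [hz hb] := Hz0 i j Eij; split => //.
  have /andP[h1 h2] := bx (inl (inord 0, i, j)); move: h1 h2.
  rewrite /= Eij inordK //= => h1 h2.
  by apply/le_anti/andP; split.
- move=> t i tT.
  have tT1 : (t < T.+1)%N by case/andP: tT => _; rewrite ltnS.
  have := nx (false, inord t, i); rewrite net_main ?inordK //=; last by case/andP: tT.
  rewrite /bsf /ypf /ymf => H; lra.
- exact: Hzc.
- move=> t i j tT Eij.
  have /andP[h1 h2] := bx (inl (inord t, i, j)); move: h1 h2.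
  rewrite /= Eij inordK ?ltnS //.
  case: (eqVneq t 0%N) => [t0|t0].
    subst t => /= h1 h2.
    have e : bsf xs 0 i j = (b0 i j)%:~R by apply/le_anti/andP; split.
    have [_ hb] := Hz0 i j Eij.
    by rewrite e -hb; apply: Hbb.
  by move=> h1 h2; rewrite -bbar_zz /bsf h2 andbT; move: h1.
- move=> t i tT.
  have tT1 : (t < T.+1)%N by case/andP: tT => _; rewrite ltnS.
  have t0 : (0 < t)%N by case/andP: tT.
  have hb0 := bx (inr (inord 0, inord t, i)); have hb1 := bx (inr (inord 1, inord t, i)).
  move: hb0 hb1; rewrite /= !inordK //= t0 /=.
  case: (i \in S) => /= /andP[h1 h2] /andP[h3 h4].
    by rewrite /ypf /ymf h1 h2 h3 h4.
  by split; apply/le_anti/andP; split.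
Qed.

Lemma prop3_sec :
  (exists b yp ym, feas b yp ym /\ by_integral E S T b yp ym) ->
  exists bs yps yms, feas bs yps yms /\ by_integral E S T bs yps yms /\
    forall b yp ym, feas b yp ym ->
      objective E S T ybar c r th0 th zz bs yps yms
      <= objective E S T ybar c r th0 th zz b yp ym.
Proof.
move=> [b1 [yp1 [ym1 [F1 _]]]].
have Hg : forall a (n : int) y, n%:~R <= y <= n%:~R + 1 ->
    g a y = g a n%:~R + (y - n%:~R) * (g a (n%:~R + 1) - g a n%:~R).
  move=> a; exact: g_pa.
have [xs [[bx nx] [xi opt]]] := @gen_opt R _ _ (@atl Node E T) (@ahd Node E T) lo up g Hg
  (fun _ => 0) (fun _ => rpred0 _)
  (ex_intro _ (X b1 yp1 ym1) (conj (X_bnd F1) (X_net F1))).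
exists (bsf xs), (ypf xs), (ymf xs); split; first exact: xs_feas F1 bx nx.
split.
  split => [t i j _ _|t i _ _]; last split; by apply/intrP; apply: xi.
move=> b yp ym Fb; rewrite !obj_X lerD2l.
rewrite /cost (eq_bigr (fun a => g a (xs a))); last first.
  by move=> a _; rewrite X_xs.
exact: opt (X_bnd Fb) (X_net Fb).
Qed.
End Fin.

Theorem proposition3 (R : realType) (Node : finType) (E : rel Node)
    (S : {set Node}) (nV : nat) (bbar ybar T : nat)
    (c : nat -> Node -> Node -> R) (r : nat -> Node -> R)
    (thmax th0 : R) (th : nat -> Node -> int -> R)
    (z0 b0 : Node -> Node -> int)
    (zs : nat -> Node -> Node -> int) :
  0 < thmax ->
  inTheta S T ybar thmax th ->
  (forall t i, (1 <= t <= T)%N -> i \in S -> 0 <= r t i) ->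
  (\sum_(i : Node) \sum_(j : Node | E i j) z0 i j = Posz nV)%R ->
  (* the problem remains feasible with z fixed to the integer-valued zs *)
  (exists (b : nat -> Node -> Node -> R) (yp ym : nat -> Node -> R),
      feasible E S T ybar bbar z0 b0 (fun t i j => (zs t i j)%:~R) b yp ym
      /\ by_integral E S T b yp ym) ->
  (* the fixed problem, with integrality of b, y relaxed, has an
     integer-valued optimal solution *)
  exists (bs : nat -> Node -> Node -> R) (yps yms : nat -> Node -> R),
    feasible E S T ybar bbar z0 b0 (fun t i j => (zs t i j)%:~R) bs yps yms
    /\ by_integral E S T bs yps yms
    /\ forall (b : nat -> Node -> Node -> R) (yp ym : nat -> Node -> R),
         feasible E S T ybar bbar z0 b0 (fun t i j => (zs t i j)%:~R) b yp ym ->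
         objective E S T ybar c r th0 th (fun t i j => (zs t i j)%:~R) bs yps yms
         <= objective E S T ybar c r th0 th (fun t i j => (zs t i j)%:~R) b yp ym.
Proof.
move=> _ _ _ _ H.
apply: prop3_sec; exact: H.
Qed.
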